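(* Let $A$ be a set of regular cardinals and let $\lambda\in\operatorname{spec}(A)$. Then either $\lambda\leq\operatorname{cf}(\prod A/J_{\mathrm{bd}})$, or $\lambda\in\operatorname{spec}(\bar A)$ for some proper initial segment $\bar A$ of $A$. In particular, if $\lambda\in\operatorname{spec}^*(A)$, then $\lambda\leq\operatorname{cf}(\prod A/J_{\mathrm{bd}})$.
   Context: $\prod A$ is the set of functions $f$ on $A$ with $f(a)\in a$, ordered pointwise. $J_{\mathrm{bd}}$ is the ideal of bounded subsets of $A$; $\operatorname{cf}(\prod A/J_{\mathrm{bd}})$ is the least size of a family $\mathcal{C}\subseteq\prod A$ such that every $h\in\prod A$ satisfies $h<f$ modulo $J_{\mathrm{bd}}$ (i.e., $\{a:h(a)\geq f(a)\}\in J_{\mathrm{bd}}$) for some $f\in\mathcal{C}$. $\operatorname{spec}(B)$, for a set $B$ of regular cardinals, is the set of regular $\kappa$ for which some $\mathcal{F}\subseteq\prod B$ of size $\kappa$ has every $\kappa$-sized subset unbounded in $(\prod B,<)$ (equivalently, $(\prod B,<)\geq_T\kappa$ in the Tukey order). For $\mathcal{G}\subseteq\prod A$, $\operatorname{ub}(\mathcal{G})$ is the set of $a\in A$ with $\{f(a):f\in\mathcal{G}\}$ unbounded in $a$. $\operatorname{spec}^*(A)$ is the set of regular $\lambda$ such that there is $\mathcal{F}\subseteq\prod A$ of size $\lambda$ with $\operatorname{ub}(\mathcal{F}_0)$ unbounded in $\sup(A)$ for every $\lambda$-sized $\mathcal{F}_0\subseteq\mathcal{F}$. *)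

(* Defs.v *)
(* Cardinals are modelled as well-ordered types (initial ordinals);
   cardinal comparison is via injections. *)
From Stdlib Require Import Classical.

Set Implicit Arguments.

Definition injective_map (X Y : Type) (f : X -> Y) : Prop :=
  forall x y, f x = f y -> x = y.

Definition inj_le (X Y : Type) : Prop := exists f : X -> Y, injective_map f.

Definition well_order (X : Type) (lt : X -> X -> Prop) : Prop :=
  well_founded lt /\
  (forall x y z, lt x y -> lt y z -> lt x z) /\
  (forall x y, lt x y \/ x = y \/ lt y x).

Definition is_cardinal (X : Type) (lt : X -> X -> Prop) : Prop :=
  well_order lt /\ forall x : X, ~ inj_le X {y : X | lt y x}.

Definition is_regular (X : Type) (lt : X -> X -> Prop) : Prop :=
  is_cardinal lt /\ inj_le nat X /\
  forall S : X -> Prop, (forall x, exists y, S y /\ ~ lt y x) -> inj_le X {y : X | S y}.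

(* A set of regular cardinals is given by an index type I and, for each
   a : I, a regular cardinal (T a, ltT a); f \in prod A is f : forall a, T a. *)

Definition idx_lt (I : Type) (T : I -> Type) (i j : I) : Prop :=
  inj_le (T i) (T j) /\ ~ inj_le (T j) (T i).

(* X is in J_bd: sup X < sup A, i.e. X is contained in {a in A | a < b} for some b in A *)
Definition bounded_in (I : Type) (T : I -> Type) (X : I -> Prop) : Prop :=
  exists b : I, forall i, X i -> idx_lt T i b.

Definition in_spec (J : Type) (S : J -> Type) (ltS : forall j, S j -> S j -> Prop)
  (K : Type) (ltK : K -> K -> Prop) : Prop :=
  is_regular ltK /\
  exists phi : K -> (forall j, S j),
    injective_map phi /\
    forall X : K -> Prop, inj_le K {x : K | X x} ->
      ~ exists g : (forall j, S j), forall x, X x -> forall j, ltS j (phi x j) (g j).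

Definition ub (I : Type) (T : I -> Type) (ltT : forall i, T i -> T i -> Prop)
  (K : Type) (phi : K -> forall i, T i) (X : K -> Prop) (i : I) : Prop :=
  ~ exists beta : T i, forall x, X x -> ltT i (phi x i) beta.

Definition in_spec_star (I : Type) (T : I -> Type) (ltT : forall i, T i -> T i -> Prop)
  (K : Type) (ltK : K -> K -> Prop) : Prop :=
  is_regular ltK /\
  exists phi : K -> (forall i, T i),
    injective_map phi /\
    forall X : K -> Prop, inj_le K {x : K | X x} ->
      ~ bounded_in T (@ub I T ltT K phi X).

Definition le_cf_bd (I : Type) (T : I -> Type) (ltT : forall i, T i -> T i -> Prop)
  (K : Type) : Prop :=
  forall C : (forall i, T i) -> Prop,
    (forall h : (forall i, T i), exists f, C f /\
        bounded_in T (fun i => ~ ltT i (h i) (f i))) ->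
    inj_le K {f : (forall i, T i) | C f}.

Definition proper_initial_segment (I : Type) (T : I -> Type) (B : I -> Prop) : Prop :=
  (forall i j, B j -> inj_le (T i) (T j) -> B i) /\ exists i, ~ B i.

(* Main.v *)
Require Import Defs.
From Stdlib Require Import Classical ClassicalEpsilon FunctionalExtensionality Wellfounded.
Set Implicit Arguments.

Lemma inj_comp (X Y Z : Type) : inj_le X Y -> inj_le Y Z -> inj_le X Z.
Proof. intros [f Hf] [g Hg]. exists (fun x => g (f x)). intros x y H. apply Hf, Hg, H. Qed.

Lemma wf_irrefl (X:Type) (lt:X->X->Prop) : well_founded lt -> forall x, ~ lt x x.
Proof. intros Hwf x. induction (Hwf x) as [x _ IH]. intros H. exact (IH x H H). Qed.

Lemma wf_min (X:Type)(lt:X->X->Prop) : well_founded lt -> forall P : X -> Prop,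
  (exists x, P x) -> exists x, P x /\ forall y, lt y x -> ~ P y.
Proof.
  intros Hwf P [x Hx]. revert Hx. induction (Hwf x) as [x _ IH]. intros Hx.
  destruct (classic (exists y, lt y x /\ P y)) as [[y [Hy Py]]|Hn].
  - exact (IH y Hy Py).
  - exists x. split; auto. intros y Hy Py. apply Hn. eauto.
Qed.

Lemma sig_eq (X:Type)(P:X->Prop) (a b : {x | P x}) : proj1_sig a = proj1_sig b -> a = b.
Proof. destruct a as [a pa], b as [b pb]; simpl; intros ->. f_equal. apply proof_irrelevance. Qed.

Lemma big_mono (L A : Type) (P Q : A -> Prop) : (forall x, P x -> Q x) ->
  inj_le L {x | P x} -> inj_le L {x | Q x}.
Proof.
  intros H [u Hu]. exists (fun y => exist Q (proj1_sig (u y)) (H _ (proj2_sig (u y)))).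
  intros a b E. apply Hu, sig_eq. exact (f_equal (@proj1_sig _ _) E).
Qed.

Lemma img_big (L A B : Type) (u : A -> B) (Hu : injective_map u) (X : A -> Prop) :
  inj_le L {x | X x} -> inj_le L {z | exists x, X x /\ z = u x}.
Proof.
  intros [v Hv].
  exists (fun y => exist (fun z => exists x, X x /\ z = u x) (u (proj1_sig (v y)))
     (ex_intro _ (proj1_sig (v y)) (conj (proj2_sig (v y)) eq_refl))).
  intros a b H. apply Hv, sig_eq, Hu. exact (f_equal (@proj1_sig _ _) H).
Qed.

Lemma small_bounded (X:Type)(lt:X->X->Prop) : is_regular lt -> forall P : X -> Prop,
  ~ inj_le X {x | P x} -> exists b, forall x, P x -> lt x b.
Proof.
  intros [_ [_ Hreg]] P Hs.
  destruct (classic (forall x, exists y, P y /\ ~ lt y x)) as [Hc|Hc].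
  - exfalso; apply Hs, Hreg, Hc.
  - apply not_all_ex_not in Hc as [b Hb]. exists b. intros x Px.
    apply NNPP; intro Hn. apply Hb. eauto.
Qed.

Lemma no_max (X:Type)(lt:X->X->Prop) : is_regular lt -> forall t, exists t', lt t t'.
Proof.
  intros [_ [[n Hn] Hreg]] t. apply NNPP; intro H.
  assert (Hc : forall x, exists y, y = t /\ ~ lt y x).
  { intros x. exists t. split; auto. intro Hl. apply H. eauto. }
  destruct (Hreg _ Hc) as [g Hg].
  assert (E : n 0 = n 1).
  { apply Hg. apply sig_eq. rewrite (proj2_sig (g (n 0))), (proj2_sig (g (n 1))). reflexivity. }
  apply Hn in E. discriminate.
Qed.

Lemma reg_wf (X:Type)(lt:X->X->Prop) : is_regular lt -> well_founded lt.
Proof. intros [[[H _] _] _]; exact H. Qed.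
Lemma reg_tr (X:Type)(lt:X->X->Prop) : is_regular lt -> forall x y z, lt x y -> lt y z -> lt x z.
Proof. intros [[[_ [H _]] _] _]; exact H. Qed.
Lemma reg_tri (X:Type)(lt:X->X->Prop) : is_regular lt -> forall x y, lt x y \/ x = y \/ lt y x.
Proof. intros [[[_ [_ H]] _] _]; exact H. Qed.
Lemma reg_card (X:Type)(lt:X->X->Prop) : is_regular lt -> forall x, ~ inj_le X {y | lt y x}.
Proof. intros [[_ H] _]; exact H. Qed.
Lemma reg_inh (X:Type)(lt:X->X->Prop) : is_regular lt -> inhabited X.
Proof. intros [_ [[n _] _]]. exact (inhabits (n 0)). Qed.

Lemma PH (X:Type)(lt:X->X->Prop) : is_regular lt -> forall (K:Type) (c : X -> K),
  ~ inj_le X K -> exists k, inj_le X {x | c x = k}.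
Proof.
  intros Hr K c HK. apply NNPP; intro Hn.
  assert (Hb : forall k, exists b, forall x, c x = k -> lt x b).
  { intro k. apply (small_bounded Hr). intro Hi. apply Hn. eauto. }
  set (beta := fun k => proj1_sig (constructive_indefinite_description _ (Hb k))).
  assert (Hbeta : forall k x, c x = k -> lt x (beta k)).
  { intros k. exact (proj2_sig (constructive_indefinite_description _ (Hb k))). }
  destruct (classic (inj_le X {y | exists k, y = beta k})) as [Hi|Hi].
  - apply HK. eapply inj_comp; [exact Hi|].
    exists (fun y : {y | exists k, y = beta k} => proj1_sig (constructive_indefinite_description (fun k => proj1_sig y = beta k) (proj2_sig y))).
    intros a b E. apply sig_eq.
    rewrite (proj2_sig (constructive_indefinite_description (fun k => proj1_sig a = beta k) (proj2_sig a))),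
            (proj2_sig (constructive_indefinite_description (fun k => proj1_sig b = beta k) (proj2_sig b))).
    simpl in E. rewrite E. reflexivity.
  - destruct (small_bounded Hr _ Hi) as [g Hg].
    apply (wf_irrefl (reg_wf Hr) g).
    apply (reg_tr Hr _ (beta (c g))).
    + apply Hbeta; reflexivity.
    + apply Hg. eauto.
Qed.

Lemma COMP (X:Type)(lt:X->X->Prop) : well_order lt -> forall Y:Type,
  inj_le X Y \/ exists x0, inj_le Y {z | lt z x0}.
Proof.
  intros [Hwf [Htr Htri]] Y.
  set (F := fun (x:X) (g : forall z, lt z x -> option Y) =>
     match excluded_middle_informative (exists y, ~ exists z (h : lt z x), g z h = Some y) with
     | left H => Some (proj1_sig (constructive_indefinite_description _ H))
     | right _ => None end).
  set (f := Fix Hwf (fun _ => option Y) F).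
  assert (Hf : forall x, f x = F x (fun z _ => f z)).
  { intro x. unfold f. apply (@Fix_eq X lt Hwf (fun _ => option Y) F). intros x0 g g' Hgg.
    assert (g = g') as ->.
    { apply functional_extensionality_dep; intro z. apply functional_extensionality_dep; intro h. apply Hgg. }
    reflexivity. }
  assert (HS : forall x y, f x = Some y -> ~ exists z, lt z x /\ f z = Some y).
  { intros x y H. rewrite Hf in H. unfold F in H.
    destruct excluded_middle_informative as [H'|H']; [|discriminate].
    injection H as <-. destruct (constructive_indefinite_description _ H') as [y' Hy']; simpl.
    intros [z [hz Hz]]. apply Hy'. exists z, hz. exact Hz. }
  assert (HN : forall x, f x = None -> forall y, exists z, lt z x /\ f z = Some y).
  { intros x H. rewrite Hf in H. unfold F in H.
    destruct excluded_middle_informative as [H'|H']; [discriminate|].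
    intro y. apply NNPP; intro Hn. apply H'. exists y. intros [z [hz Hz]]. apply Hn; eauto. }
  destruct (classic (forall x, exists y, f x = Some y)) as [Hall|Hall].
  - left. exists (fun x => proj1_sig (constructive_indefinite_description _ (Hall x))).
    intros a b Hab.
    pose proof (proj2_sig (constructive_indefinite_description _ (Hall a))) as Ha.
    pose proof (proj2_sig (constructive_indefinite_description _ (Hall b))) as Hb.
    simpl in *. rewrite Hab in Ha.
    destruct (Htri a b) as [Hl|[Heq|Hl]]; auto; exfalso.
    + apply (HS b _ Hb). eauto.
    + apply (HS a _ Ha). eauto.
  - right. apply not_all_ex_not in Hall as [x0 Hx0].
    assert (H0 : f x0 = None).
    { destruct (f x0) eqn:E; auto. exfalso; apply Hx0; eauto. }
    exists x0.
    set (g := fun y => constructive_indefinite_description _ (HN x0 H0 y)).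
    exists (fun y => exist (fun z => lt z x0) (proj1_sig (g y)) (proj1 (proj2_sig (g y)))).
    intros a b E. apply (f_equal (@proj1_sig _ _)) in E. simpl in E.
    pose proof (proj2 (proj2_sig (g a))) as Ha.
    pose proof (proj2 (proj2_sig (g b))) as Hb.
    simpl in Ha, Hb. rewrite E in Ha. rewrite Ha in Hb. injection Hb; auto.
Qed.

Lemma COMP_rel (X:Type)(lt:X->X->Prop) : well_order lt -> forall (m : X) (Y:Type),
  inj_le {z | lt z m} Y \/ exists x0, lt x0 m /\ inj_le Y {z | lt z x0}.
Proof.
  intros [Hwf [Htr Htri]] m Y.
  assert (Hwo : well_order (fun a b : {z | lt z m} => lt (proj1_sig a) (proj1_sig b))).
  { split; [|split].
    - apply (wf_inverse_image _ _ lt (@proj1_sig _ _) Hwf).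
    - intros a b c; apply Htr.
    - intros a b. destruct (Htri (proj1_sig a) (proj1_sig b)) as [H|[H|H]]; auto.
      right; left; apply sig_eq; exact H. }
  destruct (COMP Hwo Y) as [H|[x0 H]]; [left; exact H|right].
  exists (proj1_sig x0). split; [exact (proj2_sig x0)|].
  eapply inj_comp; [exact H|].
  exists (fun w => exist (fun z => lt z (proj1_sig x0)) (proj1_sig (proj1_sig w)) (proj2_sig w)).
  intros a b E. apply sig_eq, sig_eq. exact (f_equal (@proj1_sig _ _) E).
Qed.

Lemma idx_trans (I:Type) (T:I->Type) i j k : idx_lt T i j -> idx_lt T j k -> idx_lt T i k.
Proof.
  intros [Hij Hnji] [Hjk Hnkj]. split; [eapply inj_comp; eauto|].
  intro Hki. apply Hnkj. eapply inj_comp; eauto.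
Qed.

Lemma idx_irrefl (I:Type) (T:I->Type) i : ~ idx_lt T i i.
Proof. intros [H Hn]; exact (Hn H). Qed.

Lemma core (I : Type) (T : I -> Type) (ltT : forall i, T i -> T i -> Prop)
  (HA : forall i, is_regular (ltT i))
  (Hset : forall i j, inj_le (T i) (T j) -> inj_le (T j) (T i) -> i = j)
  (L : Type) (ltL : L -> L -> Prop) (HL : is_regular ltL)
  (phi : L -> forall i, T i)
  (C : (forall i, T i) -> Prop)
  (HC : forall h, exists f, C f /\ bounded_in T (fun i => ~ ltT i (h i) (f i)))
  (HCs : ~ inj_le L {f | C f}) :
  exists b F, inj_le L {y | forall i, ~ idx_lt T i b -> ltT i (phi y i) (F i)}.
Proof.
  pose proof (reg_inh HL) as inhL.
  assert (inhT : forall i, inhabited (T i)) by (intro i; exact (reg_inh (HA i))).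
  set (d := fun i => epsilon (inhT i) (fun _ => True)).
  assert (inhP : inhabited (forall i, T i)) by exact (inhabits d).
  destruct (COMP (proj1 (proj1 HL)) {f | C f}) as [H|[lC HlC]]; [contradiction|].
  set (fx := fun x => epsilon inhP (fun f => C f /\ bounded_in T (fun i => ~ ltT i (phi x i) (f i)))).
  assert (Hfx : forall x, C (fx x) /\ bounded_in T (fun i => ~ ltT i (phi x i) (fx x i))).
  { intro x. apply (epsilon_spec inhP (fun f => C f /\ bounded_in T (fun i => ~ ltT i (phi x i) (f i)))), HC. }
  assert (inhI : inhabited I).
  { destruct (HC d) as [_ [_ [i0 _]]]. exact (inhabits i0). }
  set (bx := fun x => epsilon inhI (fun b => forall i, ~ ltT i (phi x i) (fx x i) -> idx_lt T i b)).
  assert (Hbx : forall x i, ~ ltT i (phi x i) (fx x i) -> idx_lt T i (bx x)).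
  { intro x. apply (epsilon_spec inhI (fun b => forall i, ~ ltT i (phi x i) (fx x i) -> idx_lt T i b)).
    exact (proj2 (Hfx x)). }
  destruct (PH HL (fun x => exist C (fx x) (proj1 (Hfx x))) HCs) as [k Hk].
  set (f := proj1_sig k).
  assert (HXf : inj_le L {x | fx x = f}).
  { eapply big_mono; [|exact Hk]. intros x Hx. simpl in Hx. subst f. rewrite <- Hx. reflexivity. }
  set (Yb := fun b x => fx x = f /\ forall i, ~ idx_lt T i b -> ltT i (phi x i) (f i)).
  destruct (classic (exists b, inj_le L {x | Yb b x})) as [[b Hb]|Hn].
  { exists b, f. eapply big_mono; [|exact Hb]. intros x Hx; exact (proj2 Hx). }
  exfalso.
  set (hb := fun i => epsilon (inhT i) (fun beta => forall f', C f' -> ltT i (f' i) beta)).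
  destruct (HC hb) as [f' [Cf' [b0 Hb0]]].
  assert (HS : forall i, ~ idx_lt T i b0 -> inj_le (T i) {f | C f}).
  { intros i Hi. destruct (classic (exists beta, forall f', C f' -> ltT i (f' i) beta)) as [Hex|Hnex].
    - exfalso. apply Hi, Hb0. intro Hlt2.
      pose proof (epsilon_spec (inhT i) (fun beta => forall f', C f' -> ltT i (f' i) beta) Hex f' Cf') as Hlt.
      fold (hb i) in Hlt.
      apply (wf_irrefl (reg_wf (HA i)) (f' i)). eapply (reg_tr (HA i)); eauto.
    - set (P := fun t => exists f', C f' /\ f' i = t).
      assert (Hcof : forall beta, exists t, P t /\ ~ ltT i t beta).
      { intro beta. apply NNPP; intro Hn2. apply Hnex. exists beta. intros g Cg.
        apply NNPP; intro Hl. apply Hn2. exists (g i). split; [exists g; auto|exact Hl]. }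
      pose proof (proj2 (proj2 (HA i)) P Hcof) as Hi2.
      eapply inj_comp; [exact Hi2|].
      set (gg := fun t : {t | P t} => constructive_indefinite_description _ (proj2_sig t)).
      exists (fun t => exist C (proj1_sig (gg t)) (proj1 (proj2_sig (gg t)))).
      intros a c E. apply (f_equal (@proj1_sig _ _)) in E. simpl in E.
      apply sig_eq. rewrite <- (proj2 (proj2_sig (gg a))), <- (proj2 (proj2_sig (gg c))), E.
      reflexivity. }
  set (Q := fun i l => inj_le (T i) {z | ltL z l}).
  assert (HQC : forall i, ~ idx_lt T i b0 -> Q i lC).
  { intros i Hi. exact (inj_comp (HS i Hi) HlC). }
  set (ell := fun i => epsilon inhL (fun l => Q i l /\ forall z, ltL z l -> ~ Q i z)).
  assert (Hell : forall i, ~ idx_lt T i b0 -> Q i (ell i) /\ forall z, ltL z (ell i) -> ~ Q i z).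
  { intros i Hi. apply (epsilon_spec inhL (fun l => Q i l /\ forall z, ltL z l -> ~ Q i z)).
    apply (wf_min (reg_wf HL)). exists lC. exact (HQC i Hi). }
  assert (Hell2 : forall i, ~ idx_lt T i b0 -> inj_le {z | ltL z (ell i)} (T i)).
  { intros i Hi. destruct (COMP_rel (proj1 (proj1 HL)) (ell i) (T i)) as [H|[x0 [Hx0 H]]]; auto.
    exfalso. exact (proj2 (Hell i Hi) x0 Hx0 H). }
  assert (Hinj : forall i j, ~ idx_lt T i b0 -> ~ idx_lt T j b0 -> ell i = ell j -> i = j).
  { intros i j Hi Hj E. apply Hset.
    - eapply inj_comp; [exact (proj1 (Hell i Hi))|]. rewrite E. exact (Hell2 j Hj).
    - eapply inj_comp; [exact (proj1 (Hell j Hj))|]. rewrite <- E. exact (Hell2 i Hi). }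
  destruct (no_max HL lC) as [lC' HlC'].
  assert (Hlt : forall i, ~ idx_lt T i b0 -> ltL (ell i) lC').
  { intros i Hi. destruct (reg_tri HL (ell i) lC) as [H|[H|H]].
    - eapply (reg_tr HL); eauto.
    - rewrite H; exact HlC'.
    - exfalso. exact (proj2 (Hell i Hi) lC H (HQC i Hi)). }
  assert (HSsmall : ~ inj_le L {i | ~ idx_lt T i b0}).
  { intros [u Hu]. apply (reg_card HL lC').
    exists (fun x => exist (fun z => ltL z lC') (ell (proj1_sig (u x))) (Hlt _ (proj2_sig (u x)))).
    intros a c E. apply (f_equal (@proj1_sig _ _)) in E. simpl in E.
    apply Hu, sig_eq. exact (Hinj _ _ (proj2_sig (u a)) (proj2_sig (u c)) E). }
  destruct HXf as [e He].
  set (c' := fun y => let x := proj1_sig (e y) in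
     match excluded_middle_informative (idx_lt T (bx x) b0) with
     | left _ => exist (fun i => ~ idx_lt T i b0) b0 (@idx_irrefl I T b0)
     | right h => exist (fun i => ~ idx_lt T i b0) (bx x) h end).
  assert (Hc' : forall y i, idx_lt T i (bx (proj1_sig (e y))) -> idx_lt T i (proj1_sig (c' y))).
  { intros y i H. unfold c'. destruct excluded_middle_informative as [h|h]; simpl.
    - eapply idx_trans; eauto.
    - exact H. }
  destruct (PH HL c' HSsmall) as [k' Hk'].
  apply Hn. exists (proj1_sig k').
  assert (Heinj : injective_map (fun y => proj1_sig (e y))).
  { intros a c E. apply He, sig_eq, E. }
  pose proof (img_big Heinj (fun y => c' y = k') Hk') as Himg.
  eapply big_mono; [|exact Himg].
  intros z [y [Hy ->]]. split; [exact (proj2_sig (e y))|].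
  intros i Hi. apply NNPP; intro Hl. apply Hi. rewrite <- Hy. apply Hc'.
  apply Hbx. rewrite (proj2_sig (e y)). exact Hl.
Qed.
Unset Implicit Arguments.

Theorem proposition5p11
  (I : Type) (T : I -> Type) (ltT : forall i, T i -> T i -> Prop)
  (HA : forall i, @is_regular (T i) (ltT i))
  (Hset : forall i j, inj_le (T i) (T j) -> inj_le (T j) (T i) -> i = j)
  (L : Type) (ltL : L -> L -> Prop) :
  (@in_spec I T ltT L ltL ->
     @le_cf_bd I T ltT L \/
     exists B : I -> Prop, @proper_initial_segment I T B /\
       @in_spec {i : I | B i} (fun j => T (proj1_sig j))
                (fun j => ltT (proj1_sig j)) L ltL) /\
  (@in_spec_star I T ltT L ltL -> @le_cf_bd I T ltT L).
Proof.
  split.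
  - intros [HL [phi [Hphi Hsp]]].
    destruct (classic (@le_cf_bd I T ltT L)) as [H|H]; [left; exact H|right].
    unfold le_cf_bd in H. apply not_all_ex_not in H as [C HC].
    apply imply_to_and in HC as [HC HCs].
    destruct (@core I T ltT HA Hset L ltL HL phi C HC HCs) as [b [F [e He]]].
    pose proof (reg_inh HL) as inhL.
    assert (inhT : forall i, inhabited (T i)) by (intro i; exact (reg_inh (HA i))).
    exists (fun i => idx_lt T i b). split.
    { split.
      - intros i j Hj Hij. destruct Hj as [Hjb Hnbj]. split; [eapply inj_comp; eauto|].
        intro Hbi. apply Hnbj. eapply inj_comp; eauto.
      - exists b. apply idx_irrefl. }
    split; [exact HL|].
    set (B := fun i => idx_lt T i b).
    set (phi2 := fun y (j : {i | B i}) => phi (proj1_sig (e y)) (proj1_sig j)).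
    assert (Heinj : injective_map (fun y => proj1_sig (e y))).
    { intros a c E. apply He, sig_eq, E. }
    assert (P2 : forall X : L -> Prop, inj_le L {x | X x} ->
       ~ exists g : (forall j : {i | B i}, T (proj1_sig j)),
           forall x, X x -> forall j, ltT (proj1_sig j) (phi2 x j) (g j)).
    { intros X HX [g Hg].
      apply (Hsp _ (img_big Heinj X HX)).
      exists (fun i => match excluded_middle_informative (B i) with
                       | left h => g (exist B i h) | right _ => F i end).
      intros z [x [Hx ->]] i.
      destruct excluded_middle_informative as [h|h].
      - exact (Hg x Hx (exist B i h)).
      - exact (proj2_sig (e x) i h). }
    set (c := fun x => epsilon inhL (fun y => phi2 y = phi2 x)).
    assert (Hc : forall x, phi2 (c x) = phi2 x).
    { intro x. apply (epsilon_spec inhL (fun y => phi2 y = phi2 x)). exists x; reflexivity. }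
    assert (Hcphi : forall x x', phi2 x = phi2 x' -> c x = c x').
    { intros x x' E. unfold c. rewrite E. reflexivity. }
    assert (Hcc : forall x, c (c x) = c x) by (intro x; apply Hcphi, Hc).
    assert (HR : inj_le L {x | c x = x}).
    { apply NNPP; intro HnR. destruct (small_bounded HL _ HnR) as [beta Hbeta].
      destruct (PH HL (fun x => exist (fun z => ltL z beta) (c x) (Hbeta _ (Hcc x)))
                 (reg_card HL beta)) as [k Hk].
      set (v := phi2 (proj1_sig k)).
      assert (Hsucc : forall j : {i | B i}, exists t, ltT (proj1_sig j) (v j) t).
      { intro j. exact (no_max (HA (proj1_sig j)) (v j)). }
      apply (P2 _ Hk).
      exists (fun j => epsilon (inhT (proj1_sig j)) (fun t => ltT (proj1_sig j) (v j) t)).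
      intros x Hx j.
      assert (Ex : phi2 x = v).
      { unfold v. rewrite <- Hx. simpl. symmetry. apply Hc. }
      rewrite Ex. apply (epsilon_spec (inhT (proj1_sig j)) (fun t => ltT (proj1_sig j) (v j) t)).
      apply Hsucc. }
    destruct HR as [r Hr].
    exists (fun y => phi2 (proj1_sig (r y))). split.
    + intros a a' E. apply Hr, sig_eq.
      rewrite <- (proj2_sig (r a)), <- (proj2_sig (r a')). apply Hcphi, E.
    + intros X HX [g Hg].
      assert (Hrinj : injective_map (fun y => proj1_sig (r y))).
      { intros a a' E. apply Hr, sig_eq, E. }
      apply (P2 _ (img_big Hrinj X HX)). exists g.
      intros z [y [Hy ->]] j. exact (Hg y Hy j).
  - intros [HL [phi [Hphi Hsp]]]. apply NNPP; intro H.
    unfold le_cf_bd in H. apply not_all_ex_not in H as [C HC].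
    apply imply_to_and in HC as [HC HCs].
    destruct (@core I T ltT HA Hset L ltL HL phi C HC HCs) as [b [F HY]].
    apply (Hsp _ HY). exists b. intros i Hub. apply NNPP; intro Hi. apply Hub.
    exists (F i). intros x Hx. exact (Hx i Hi).
Qed.
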